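(* Let $d\ge2$ be finite and consider a $d$-dimensional quantum system with finitely many measurement settings and finitely many outcomes. A measurement $x$ is specified by effects $\{\mathcal{E}_{a|x}\}_a$ (positive semidefinite, $\sum_a\mathcal{E}_{a|x}=\mathbb{1}$) together with, for each outcome $a$, a post-measurement state $\sigma_{a|x}$; the same measurements are used at both time steps, so that $p(ab|xy)=\mathrm{tr}(\mathcal{E}_{a|x}\varrho_{in})\,\mathrm{tr}(\mathcal{E}_{b|y}\sigma_{a|x})$. For arbitrary real coefficients $\alpha_{abxy}$ let $\mathcal{R}=\sum_{a,b,x,y}\alpha_{abxy}\,p(ab|xy)$, and let $R(\mathcal{P})$ be the supremum of $\mathcal{R}$ over all initial states $\varrho_{in}$ with purity $\mathrm{tr}(\varrho_{in}^2)=\mathcal{P}$ and all choices of effects and post-measurement states. Then $R(\mathcal{P})$ is a monotonically non-decreasing function of $\mathcal{P}\in[1/d,1]$.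
   Context: The purity of a state $\varrho$ is $\mathrm{tr}(\varrho^2)$, which ranges from $1/d$ (maximally mixed state) to $1$ (pure states). *)

(* Defs.v *)
From HB Require Import structures.
From mathcomp Require Import all_boot all_order all_algebra.
From mathcomp Require Import complex.
From mathcomp Require Import all_classical all_reals.
From mathcomp Require Import ereal.

Set Implicit Arguments.
Unset Strict Implicit.
Unset Printing Implicit Defensive.

Import Order.TTheory GRing.Theory Num.Theory.
Local Open Scope ring_scope.

Definition adjmx (R : rcfType) (m n : nat) (A : 'M[R[i]]_(m, n)) : 'M[R[i]]_(n, m) :=
  (map_mx Num.conj A)^T.

(* positive semidefinite: Hermitian, and v^* A v >= 0 for every vector v
   (in the order of the numClosedField R[i], i.e. real and nonnegative) *)
Definition psd (R : rcfType) (d : nat) (A : 'M[R[i]]_d) : Prop :=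
  adjmx A = A /\ forall v : 'cV[R[i]]_d, 0 <= (adjmx v *m A *m v) 0 0.

Definition is_state (R : rcfType) (d : nat) (rho : 'M[R[i]]_d) : Prop :=
  psd rho /\ \tr rho = 1.

(* purity tr(rho^2), a real number for Hermitian rho *)
Definition purity (R : rcfType) (d : nat) (rho : 'M[R[i]]_d) : R :=
  complex.Re (\tr (rho *m rho)).

(* A measurement x with k outcomes: effects E x a (POVM) and post-measurement
   states sig x a. *)
Definition is_instrument (R : rcfType) (d m k : nat)
  (E sig : 'I_m -> 'I_k -> 'M[R[i]]_d) : Prop :=
  forall x : 'I_m,
    (forall a : 'I_k, psd (E x a)) /\
    \sum_(a < k) E x a = 1%:M /\
    (forall a : 'I_k, is_state (sig x a)).

Definition seqprob (R : rcfType) (d m k : nat) (E sig : 'I_m -> 'I_k -> 'M[R[i]]_d)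
  (rho : 'M[R[i]]_d) (a b : 'I_k) (x y : 'I_m) : R[i] :=
  \tr (E x a *m rho) * \tr (E y b *m sig x a).

Definition Rval (R : rcfType) (d m k : nat) (alpha : 'I_k -> 'I_k -> 'I_m -> 'I_m -> R)
  (E sig : 'I_m -> 'I_k -> 'M[R[i]]_d) (rho : 'M[R[i]]_d) : R :=
  \sum_(a < k) \sum_(b < k) \sum_(x < m) \sum_(y < m)
     alpha a b x y * complex.Re (seqprob E sig rho a b x y).

Definition Rmax (R : realType) (d m k : nat) (alpha : 'I_k -> 'I_k -> 'I_m -> 'I_m -> R)
  (P : R) : \bar R :=
  ereal_sup [set r : \bar R | exists (rho : 'M[R[i]]_d)
       (E sig : 'I_m -> 'I_k -> 'M[R[i]]_d),
       [/\ is_state rho, purity rho = P, is_instrument E sig &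
            r = (Rval alpha E sig rho)%:E]]%classic.

(* Main.v *)
Require Import Defs.
From HB Require Import structures.
From mathcomp Require Import all_boot all_order all_algebra.
From mathcomp Require Import complex.
From mathcomp Require Import all_classical all_reals.
From mathcomp Require Import ereal.
From mathcomp Require Import spectral sesquilinear.
From mathcomp Require Import ring lra.
Import Order.TTheory GRing.Theory Num.Theory.
Local Open Scope ring_scope.
Set Implicit Arguments.
Unset Strict Implicit.
Unset Printing Implicit Defensive.
Local Open Scope complex_scope.
Local Open Scope ring_scope.


Lemma ReD (R : rcfType) (x y : R[i]) : complex.Re (x + y) = complex.Re x + complex.Re y.
Proof. by case: x; case: y. Qed.

Lemma ReMr (R : rcfType) (r : R) (x : R[i]) : complex.Re (r%:C * x) = r * complex.Re x.
Proof. by case: x => a b /=; rewrite mul0r subr0. Qed.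

Lemma conj_realC (R : rcfType) (r : R) : Num.conj (r%:C : R[i]) = r%:C.
Proof. exact: conjc_real. Qed.

Lemma adjmxE (R : rcfType) m n (A : 'M[R[i]]_(m,n)) : adjmx A = (A ^t* )%sesqui.
Proof. by rewrite /adjmx map_trmx. Qed.

Lemma sum4D (R : rcfType) k m (F G : 'I_k -> 'I_k -> 'I_m -> 'I_m -> R) :
  \sum_(a < k) \sum_(b < k) \sum_(x < m) \sum_(y < m) (F a b x y + G a b x y) =
  \sum_(a < k) \sum_(b < k) \sum_(x < m) \sum_(y < m) F a b x y +
  \sum_(a < k) \sum_(b < k) \sum_(x < m) \sum_(y < m) G a b x y.
Proof.
rewrite -big_split; apply: eq_bigr => a _.
rewrite -big_split; apply: eq_bigr => b _.
rewrite -big_split; apply: eq_bigr => x _.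
by rewrite -big_split.
Qed.

Lemma sum4Z (R : rcfType) k m (c : R) (F : 'I_k -> 'I_k -> 'I_m -> 'I_m -> R) :
  \sum_(a < k) \sum_(b < k) \sum_(x < m) \sum_(y < m) (c * F a b x y) =
  c * \sum_(a < k) \sum_(b < k) \sum_(x < m) \sum_(y < m) F a b x y.
Proof.
rewrite mulr_sumr; apply: eq_bigr => a _.
rewrite mulr_sumr; apply: eq_bigr => b _.
rewrite mulr_sumr; apply: eq_bigr => x _.
by rewrite mulr_sumr.
Qed.

Lemma eq_sum4 (R : rcfType) k m (F G : 'I_k -> 'I_k -> 'I_m -> 'I_m -> R) :
  (forall a b x y, F a b x y = G a b x y) ->
  \sum_(a < k) \sum_(b < k) \sum_(x < m) \sum_(y < m) F a b x y =
  \sum_(a < k) \sum_(b < k) \sum_(x < m) \sum_(y < m) G a b x y.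
Proof.
move=> H; apply: eq_bigr => a _; apply: eq_bigr => b _; apply: eq_bigr => x _.
by apply: eq_bigr => y _.
Qed.

Lemma RvalD (R : rcfType) d m k alpha (E sig : 'I_m -> 'I_k -> 'M[R[i]]_d) M N :
  Rval alpha E sig (M + N) = Rval alpha E sig M + Rval alpha E sig N.
Proof.
rewrite /Rval -sum4D; apply: eq_sum4 => a b x y.
by rewrite /seqprob mulmxDr mxtraceD mulrDl ReD mulrDr.
Qed.

Lemma RvalZ (R : rcfType) d m k alpha (E sig : 'I_m -> 'I_k -> 'M[R[i]]_d) (c : R) M :
  Rval alpha E sig (c%:C *: M) = c * Rval alpha E sig M.
Proof.
rewrite /Rval -sum4Z; apply: eq_sum4 => a b x y.
by rewrite /seqprob -scalemxAr mxtraceZ -mulrA ReMr mulrCA.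
Qed.

Lemma Rval0 (R : rcfType) d m k alpha (E sig : 'I_m -> 'I_k -> 'M[R[i]]_d) :
  Rval alpha E sig 0 = 0.
Proof.
by have := RvalZ alpha E sig 0 0; rewrite scale0r mul0r.
Qed.

Lemma Rval_sum (R : rcfType) d m k alpha (E sig : 'I_m -> 'I_k -> 'M[R[i]]_d) n
   (c : 'I_n -> R) (M : 'I_n -> 'M[R[i]]_d) :
  Rval alpha E sig (\sum_(j < n) (c j)%:C *: M j) = \sum_(j < n) c j * Rval alpha E sig (M j).
Proof.
apply: (big_ind2 (fun A r => Rval alpha E sig A = r)).
- exact: Rval0.
- by move=> A r B s <- <-; rewrite RvalD.
- by move=> j _; rewrite RvalZ.
Qed.

Lemma adjmxM (R : rcfType) m n p (A : 'M[R[i]]_(m,n)) (B : 'M[R[i]]_(n,p)) :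
  adjmx (A *m B) = adjmx B *m adjmx A.
Proof. by rewrite /adjmx map_mxM trmx_mul. Qed.

Lemma adjmx_delta (R : rcfType) m n (i0 : 'I_m) (j0 : 'I_n) :
  adjmx (delta_mx i0 j0 : 'M[R[i]]_(m,n)) = delta_mx j0 i0.
Proof.
apply/matrixP => i j; rewrite /adjmx !mxE.
by case: (i == j0); case: (j == i0) => /=; rewrite ?rmorph1 ?rmorph0.
Qed.

Lemma delta_entry (R : rcfType) d (M : 'M[R[i]]_d) i j :
  (delta_mx (0:'I_1) i *m M *m delta_mx j (0:'I_1)) 0 0 = M i j.
Proof. by rewrite -rowE -colE !mxE. Qed.

Lemma tr_delta (R : rcfType) d (j : 'I_d) : \tr (delta_mx j j : 'M[R[i]]_d) = 1.
Proof.
rewrite -(mul_delta_mx (0 : 'I_1)) mxtrace_mulC mul_delta_mx.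
by rewrite /mxtrace big_ord1 mxE.
Qed.

Lemma sg_state (R : rcfType) d (P : 'M[R[i]]_d) (j : 'I_d) :
  P *m (P ^t* )%sesqui = 1%:M -> (P ^t* )%sesqui *m P = 1%:M ->
  is_state ((P ^t* )%sesqui *m delta_mx j j *m P) /\
  purity ((P ^t* )%sesqui *m delta_mx j j *m P) = 1.
Proof.
move=> PPt PtP.
have adjP : adjmx P = (P ^t* )%sesqui by rewrite adjmxE.
have adjPt : adjmx (P ^t* )%sesqui = P by rewrite adjmxE trmxCK.
split; [split; [split|]|].
- by rewrite !adjmxM adjP adjPt adjmx_delta mulmxA.
- move=> v.
  have -> : adjmx v *m ((P ^t* )%sesqui *m delta_mx j j *m P) *m v =
     adjmx (P *m v) *m delta_mx j (0:'I_1) *m (delta_mx (0:'I_1) j *m (P *m v)).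
    by rewrite adjmxM adjP !mulmxA -[_ *m delta_mx j 0 *m delta_mx 0 j]mulmxA mul_delta_mx.
  rewrite -rowE -colE !mxE big_ord1 !mxE mulrC.
  exact: mul_conjC_ge0.
- by rewrite mxtrace_mulC mulmxA PPt mul1mx tr_delta.
- rewrite /purity.
  have -> : (P ^t* )%sesqui *m delta_mx j j *m P *m ((P ^t* )%sesqui *m delta_mx j j *m P)
     = (P ^t* )%sesqui *m delta_mx j j *m P.
    rewrite !mulmxA -[_ *m P *m (P ^t* )%sesqui]mulmxA PPt mulmx1.
    by rewrite -[_ *m delta_mx j j *m delta_mx j j]mulmxA mul_delta_mx.
  by rewrite mxtrace_mulC mulmxA PPt mul1mx tr_delta.
Qed.

Lemma ge0_realC (R : rcfType) (x : R[i]) : 0 <= x -> x = (complex.Re x)%:C /\ 0 <= complex.Re x.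
Proof.
rewrite lecE => /andP[/eqP H1 H2]; split => //.
by case: x H1 H2 => a b /= -> _.
Qed.

Lemma pure_exists (R : rcfType) d m k alpha (E sig : 'I_m -> 'I_k -> 'M[R[i]]_d) rho :
  (0 < d)%N -> is_state rho ->
  exists sigma, is_state sigma /\ purity sigma = 1 /\
     Rval alpha E sig rho <= Rval alpha E sig sigma.
Proof.
move=> d0 [[herm psdr] tr1].
set P := spectralmx rho; set D := spectral_diag rho.
have Pu : P \is unitarymx := spectral_unitarymx rho.
have PPt : P *m (P ^t* )%sesqui = 1%:M by apply/unitarymxP.
have PtP : (P ^t* )%sesqui *m P = 1%:M by rewrite -[LHS]mul1mx mulmxA mulmxKtV.
have normal : rho \is normalmx by apply/normalmxP; rewrite -adjmxE herm.
have rhoE : rho = (P ^t* )%sesqui *m diag_mx D *m P.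
  by rewrite -invmx_unitary //; exact/orthomx_spectralP.
pose sg j := (P ^t* )%sesqui *m delta_mx j j *m P.
have rho_sum : rho = \sum_j D 0 j *: sg j.
  rewrite {1}rhoE diag_mx_sum_delta mulmx_sumr mulmx_suml; apply: eq_bigr => j _.
  by rewrite /sg scalemxAl scalemxAr.
have Dge0 : forall j, 0 <= D 0 j.
  move=> j.
  have -> : D 0 j = (P *m rho *m (P ^t* )%sesqui) j j.
    by rewrite rhoE !mulmxA PPt mul1mx -mulmxA PPt mulmx1 mxE eqxx mulr1n.
  have := psdr ((P ^t* )%sesqui *m delta_mx j (0:'I_1)).
  have -> : adjmx ((P ^t* )%sesqui *m delta_mx j (0:'I_1)) *m rho *m ((P ^t* )%sesqui *m delta_mx j (0:'I_1))
     = delta_mx (0:'I_1) j *m (P *m rho *m (P ^t* )%sesqui) *m delta_mx j (0:'I_1).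
    by rewrite adjmxM adjmx_delta adjmxE trmxCK !mulmxA.
  by rewrite delta_entry.
have Dr : forall j, D 0 j = (complex.Re (D 0 j))%:C by move=> j; case: (ge0_realC (Dge0 j)).
have Dp : forall j, 0 <= complex.Re (D 0 j) by move=> j; case: (ge0_realC (Dge0 j)).
have sgS : forall j, is_state (sg j) /\ purity (sg j) = 1 by move=> j; exact: sg_state.
have sumD : \sum_j complex.Re (D 0 j) = 1.
  apply: complexI; rewrite rmorph_sum rmorph1 -tr1 rho_sum raddf_sum; apply: eq_bigr => j _.
  by rewrite /= mxtraceZ (proj2 (proj1 (sgS j))) mulr1 -Dr.
have rvE : Rval alpha E sig rho = \sum_j complex.Re (D 0 j) * Rval alpha E sig (sg j).
  rewrite -Rval_sum; congr Rval; rewrite {1}rho_sum; apply: eq_bigr => j _.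
  by rewrite -Dr.
pose i0 := Ordinal d0.
case: (@arg_maxP _ R _ i0 xpredT (fun j => Rval alpha E sig (sg j)) isT) => j0 _ Hj0.
exists (sg j0); split; first exact: (proj1 (sgS j0)).
split; first exact: (proj2 (sgS j0)).
rewrite rvE; apply: le_trans (_ : \sum_j complex.Re (D 0 j) * Rval alpha E sig (sg j0) <= _).
  apply: ler_sum => j _; apply: ler_wpM2l; first exact: Dp.
  exact: (Hj0 j isT).
by rewrite -mulr_suml sumD mul1r.
Qed.


Lemma adjmxD (R : rcfType) d (A B : 'M[R[i]]_d) : adjmx (A + B) = adjmx A + adjmx B.
Proof. by apply/matrixP => i j; rewrite /adjmx [LHS]mxE [RHS]mxE !mxE rmorphD. Qed.

Lemma adjmxZ (R : rcfType) d (a : R) (A : 'M[R[i]]_d) : adjmx (a%:C *: A) = a%:C *: adjmx A.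
Proof. by apply/matrixP => i j; rewrite /adjmx [LHS]mxE [RHS]mxE !mxE rmorphM; congr (_ * _); apply: conj_realC. Qed.

Lemma tr4 (R : rcfType) d (A B C D : 'M[R[i]]_d) :
  \tr (A + B + (C + D)) = \tr A + \tr B + (\tr C + \tr D).
Proof. by rewrite !mxtraceD. Qed.

Lemma tr4Z (R : rcfType) d (a1 b1 a2 b2 a3 b3 a4 b4 : R[i]) (X1 X2 X3 X4 : 'M[R[i]]_d) :
  \tr (a1 *: (b1 *: X1) + a2 *: (b2 *: X2) + (a3 *: (b3 *: X3) + a4 *: (b4 *: X4))) =
  a1 * (b1 * \tr X1) + a2 * (b2 * \tr X2) + (a3 * (b3 * \tr X3) + a4 * (b4 * \tr X4)).
Proof. by rewrite !mxtraceD !mxtraceZ. Qed.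

Lemma purity_mix (R : rcfType) d (a b : R) (A B : 'M[R[i]]_d) :
  purity (a%:C *: A + b%:C *: B) = a * a * purity A +
     a * b * (complex.Re (\tr (A *m B)) + complex.Re (\tr (B *m A))) + b * b * purity B.
Proof.
rewrite /purity mulmxDl !mulmxDr -!scalemxAl -!scalemxAr.
rewrite tr4Z.
rewrite !ReD.
have ReM : forall (r : R) (x : R[i]), complex.Re (r%:C * x) = r * complex.Re x.
  by move=> r [x1 x2] /=; rewrite mul0r subr0.
rewrite !ReM.
ring.
Qed.

Lemma mix (R : rcfType) d m k alpha (E sig : 'I_m -> 'I_k -> 'M[R[i]]_d) rho sigma (P2 : R) :
  is_state rho -> is_state sigma -> purity sigma = 1 -> purity rho <= P2 -> P2 <= 1 ->
  Rval alpha E sig rho <= Rval alpha E sig sigma ->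
  exists rho', is_state rho' /\ purity rho' = P2 /\
     Rval alpha E sig rho <= Rval alpha E sig rho'.
Proof.
move=> [[hr pr] tr] [[hs ps] ts] pus prP2 P21 Rle.
pose rt t := (1 - t)%:C *: rho + t%:C *: sigma.
pose c := complex.Re (\tr (rho *m sigma)) + complex.Re (\tr (sigma *m rho)).
have purE : forall t, purity (rt t) = (1-t)*(1-t) * purity rho + (1-t)*t*c + t*t.
  by move=> t; rewrite /rt purity_mix pus mulr1.
pose q : {poly R} := (1 - 'X) * (1 - 'X) * (purity rho)%:P + (1 - 'X) * 'X * c%:P + 'X * 'X - P2%:P.
have qE : forall t, q.[t] = purity (rt t) - P2.
  by move=> t; rewrite purE /q !hornerE.
have [t /andP[t0 t1] rq] : exists2 t, 0 <= t <= 1 & root q t.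
  apply: poly_ivt => //; rewrite !qE /rt.
  rewrite !purE; apply/andP; split; lra.
exists (rt t); split; [split; [split|]|split].
- by rewrite /rt adjmxD !adjmxZ hr hs.
- move=> v; rewrite /rt mulmxDr mulmxDl -!scalemxAr -!scalemxAl.
  have h1 := pr v; have h2 := ps v.
  rewrite mxE; apply: addr_ge0; rewrite mxE; apply: mulr_ge0; rewrite ?ler0c ?subr_ge0 //.
- by rewrite /rt mxtraceD !mxtraceZ tr ts !mulr1 -rmorphD subrK rmorph1.
- by move: rq; rewrite /root qE subr_eq0 => /eqP.
- rewrite /rt RvalD !RvalZ.
  have : 0 <= t * (Rval alpha E sig sigma - Rval alpha E sig rho) by apply: mulr_ge0; rewrite ?subr_ge0.
  by nra.
Qed.

Unset Implicit Arguments.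
Local Close Scope complex_scope.

Theorem mainTheorem5 (R : realType) (d m k : nat)
  (alpha : 'I_k -> 'I_k -> 'I_m -> 'I_m -> R) (P1 P2 : R) :
  (2 <= d)%N ->
  (d%:R)^-1 <= P1 -> P1 <= P2 -> P2 <= 1 ->
  (Rmax d alpha P1 <= Rmax d alpha P2)%E.
Proof.
move=> d2 _ P12 P21.
apply: ge_ereal_sup => r [rho [E [sig [Hs Hp Hi ->]]]].
have d0 : (0 < d)%N by apply: leq_trans d2.
have [sigma [Ss [Ps Rs]]] := pure_exists alpha E sig d0 Hs.
have HP : purity rho <= P2 by rewrite Hp.
have [rho' [S' [P' R']]] := mix Hs Ss Ps HP P21 Rs.
apply: le_trans (ereal_sup_ubound _); last first.
  by exists rho', E, sig; split.
by rewrite lee_fin.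
Qed.
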